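(* For every $N\ge2$ and all masses $m_1,\dots,m_N>0$, $$C(\mathbf m)\ \ge\ C_L(\mathbf m):=\gamma\Big(\sum_{i<j}m_im_j\Big)^{3/2}\Big(\sum_i m_i\Big)^{-1/2}.$$
   Context: Fix $\gamma>0$. Planar configuration space $\mathfrak R=\{\mathbf r=(\mathbf r_1,\dots,\mathbf r_N)\in(\mathbb R^2)^N:\ \mathbf r_i\neq\mathbf r_j \text{ for } i\neq j\}$; $f(\mathbf r)=\sum_{i<j}\frac{\gamma m_im_j}{|\mathbf r_j-\mathbf r_i|}$, $g(\mathbf r)=\sum_i m_i|\mathbf r_i|^2$; $C(\mathbf m)=\min\{f(\mathbf r):\mathbf r\in\mathfrak R,\ g(\mathbf r)=1\}$, where $\mathbf m=(m_1,\dots,m_N)$. *)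

(* Defs.v *)
From HB Require Import structures.
From mathcomp Require Import all_boot all_order all_algebra.
From mathcomp Require Import all_classical all_reals all_analysis.
Set Implicit Arguments. Unset Strict Implicit. Unset Printing Implicit Defensive.
Import Order.TTheory GRing.Theory Num.Theory.
Local Open Scope classical_set_scope.
Local Open Scope ring_scope.

Section Defs.
Variable R : realType.

Definition pnorm (p : R * R) : R := Num.sqrt (p.1 ^+ 2 + p.2 ^+ 2).
Definition pdist (p q : R * R) : R := pnorm (q.1 - p.1, q.2 - p.2).

Definition config_space {N : nat} : set ('I_N -> R * R) :=
  [set r | forall i j : 'I_N, i != j -> r i <> r j].

Definition fpot (gamma : R) (N : nat) (m : 'I_N -> R) (r : 'I_N -> R * R) : R :=
  \sum_(i < N) \sum_(j < N | (i < j)%N) gamma * m i * m j / pdist (r i) (r j).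

Definition gmom (N : nat) (m : 'I_N -> R) (r : 'I_N -> R * R) : R :=
  \sum_(i < N) m i * pnorm (r i) ^+ 2.

(* C(m) = min { f(r) : r in config space, g(r) = 1 } (as an infimum) *)
Definition Cmin (gamma : R) (N : nat) (m : 'I_N -> R) : R :=
  inf [set fpot gamma m r | r in [set r : 'I_N -> R * R | config_space r /\ gmom m r = 1]].

Definition CL (gamma : R) (N : nat) (m : 'I_N -> R) : R :=
  gamma * ((\sum_(i < N) \sum_(j < N | (i < j)%N) m i * m j) `^ (3 / 2))
        * ((\sum_(i < N) m i) `^ (- (1 / 2))).

End Defs.

(* Main.v *)
Require Import Defs.
From HB Require Import structures.
From mathcomp Require Import all_boot all_order all_algebra.
From mathcomp Require Import all_classical all_reals all_analysis.
From mathcomp Require Import ring lra.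
Import Order.TTheory GRing.Theory Num.Theory.
Local Open Scope ring_scope.

Section Aux.
Variable R : realType.

Lemma tangent (d t : R) : 0 < d -> 0 < t ->
  3 / (2 * t) - d ^+ 2 / (2 * t ^+ 3) <= 1 / d.
Proof.
move=> d0 t0.
have e : 1 / d - (3 / (2 * t) - d ^+ 2 / (2 * t ^+ 3)) =
   (d - t) ^+ 2 * (d + 2 * t) / (2 * d * t ^+ 3).
  by field; rewrite ?mulf_neq0 ?expf_neq0 ?gt_eqF.
rewrite -subr_ge0 e; apply: divr_ge0.
  apply: mulr_ge0; first exact: sqr_ge0. 
  by apply: addr_ge0; rewrite ?mulr_ge0 ?ltW.
by rewrite !mulr_ge0 ?exprn_ge0 ?ltW.
Qed.

Lemma sum_tri (N : nat) (F : 'I_N -> 'I_N -> R) :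
  (forall i j, F i j = F j i) -> (forall i, F i i = 0) ->
  \sum_(i < N) \sum_(j < N | (i < j)%N) F i j =
  2^-1 * \sum_(i < N) \sum_(j < N) F i j.
Proof.
move=> Fs F0.
have -> : \sum_(i < N) \sum_(j < N) F i j =
  \sum_(i < N) \sum_(j < N) ((if (i < j)%N then F i j else 0) +
                             (if (j < i)%N then F i j else 0)).
  apply: eq_bigr => i _; apply: eq_bigr => j _.
  case: ltngtP => h; rewrite ?addr0 ?add0r //.
  by have -> : i = j by apply: val_inj. 
have -> : \sum_(i < N) \sum_(j < N) ((if (i < j)%N then F i j else 0) +
                             (if (j < i)%N then F i j else 0)) =
  \sum_(i < N) (\sum_(j < N) (if (i < j)%N then F i j else 0) +
   \sum_(j < N) (if (j < i)%N then F i j else 0)).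
  by apply: eq_bigr => i _; rewrite big_split.
rewrite big_split /=.
rewrite [X in _ + X]exchange_big /=.
have -> : \sum_(j < N) \sum_(i < N) (if (j < i)%N then F i j else 0) =
   \sum_(j < N) \sum_(i < N) (if (j < i)%N then F j i else 0).
  by apply: eq_bigr => i _; apply: eq_bigr => j _; rewrite Fs.
have -> : \sum_(i < N) \sum_(j < N | (i < j)%N) F i j =
   \sum_(i < N) \sum_(j < N) (if (i < j)%N then F i j else 0).
  by apply: eq_bigr => i _; rewrite big_mkcond.
set X := \sum_(i < N) _.
by field.
Qed.

Lemma expand (N : nat) (m x : 'I_N -> R) :
  \sum_(i < N) \sum_(j < N) m i * m j * (x j - x i) ^+ 2 =
  2 * ((\sum_(i < N) m i) * (\sum_(i < N) m i * x i ^+ 2)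
       - (\sum_(i < N) m i * x i) ^+ 2).
Proof.
have e : forall i j, m i * m j * (x j - x i) ^+ 2 =
   m i * (m j * x j ^+ 2) + (m i * x i ^+ 2) * m j - 2 * ((m i * x i) * (m j * x j)).
  by move=> i j; ring.
under eq_bigr => i _ do under eq_bigr => j _ do rewrite e.
under eq_bigr => i _ do rewrite big_split /= big_split /= sumrN.
rewrite big_split /= big_split /= sumrN.
have h1 : \sum_(i < N) \sum_(j < N) m i * (m j * x j ^+ 2) =
   (\sum_(i < N) m i) * \sum_(j < N) m j * x j ^+ 2.
  by rewrite mulr_suml; apply: eq_bigr => i _; rewrite mulr_sumr.
have h2 : \sum_(i < N) \sum_(j < N) m i * x i ^+ 2 * m j =
   (\sum_(i < N) m i * x i ^+ 2) * \sum_(j < N) m j.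
  by rewrite mulr_suml; apply: eq_bigr => i _; rewrite mulr_sumr.
have h3 : \sum_(i < N) \sum_(j < N) 2 * (m i * x i * (m j * x j)) =
   2 * ((\sum_(i < N) m i * x i) * \sum_(j < N) m j * x j).
  rewrite mulr_suml mulr_sumr; apply: eq_bigr => i _; rewrite mulr_sumr mulr_sumr.
  by apply: eq_bigr => j _.
rewrite h1 h2 h3; ring.
Qed.


Lemma pdist_sq (p q : R * R) :
  pdist p q ^+ 2 = (q.1 - p.1) ^+ 2 + (q.2 - p.2) ^+ 2.
Proof. by rewrite /pdist /pnorm sqr_sqrtr // addr_ge0 // sqr_ge0. Qed.

Lemma pdist_gt0 (p q : R * R) : p <> q -> 0 < pdist p q.
Proof.
move=> pq; rewrite /pdist /pnorm sqrtr_gt0 /= lt_def.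
rewrite addr_ge0 ?sqr_ge0 // andbT paddr_eq0 ?sqr_ge0 // !sqrf_eq0 !subr_eq0.
apply/negP => /andP [/eqP h1 /eqP h2]; apply: pq.
by case: p q h1 h2 => [a b] [c d] /= -> ->.
Qed.

Lemma psum_gt0 (N : nat) (P : pred 'I_N) (F : 'I_N -> R) (i0 : 'I_N) :
  P i0 -> (forall i, P i -> 0 <= F i) -> 0 < F i0 -> 0 < \sum_(i < N | P i) F i.
Proof.
move=> Pi0 Fge Fi0; rewrite (bigD1 i0) //=.
have : 0 <= \sum_(i < N | P i && (i != i0)) F i.
  by apply: sumr_ge0 => i /andP [] /Fge.
lra.
Qed.

Lemma D_le (N : nat) (m : 'I_N -> R) (r : 'I_N -> R * R) :
  (forall i, 0 <= m i) -> gmom m r = 1 ->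
  \sum_(i < N) \sum_(j < N | (i < j)%N) m i * m j * pdist (r i) (r j) ^+ 2
  <= \sum_(i < N) m i.
Proof.
move=> m0 g1.
pose x i := (r i).1. pose y i := (r i).2.
have -> : \sum_(i < N) \sum_(j < N | (i < j)%N) m i * m j * pdist (r i) (r j) ^+ 2
  = \sum_(i < N) \sum_(j < N | (i < j)%N)
      (m i * m j * (x j - x i) ^+ 2 + m i * m j * (y j - y i) ^+ 2).
  by apply: eq_bigr => i _; apply: eq_bigr => j _; rewrite pdist_sq mulrDr.
rewrite sum_tri; last first.
- by move=> i; rewrite !subrr expr0n /= !mulr0 addr0.
- by move=> i j; congr (_ + _); ring.
have -> : \sum_(i < N) \sum_(j < N)
      (m i * m j * (x j - x i) ^+ 2 + m i * m j * (y j - y i) ^+ 2) =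
    \sum_(i < N) \sum_(j < N) m i * m j * (x j - x i) ^+ 2 +
    \sum_(i < N) \sum_(j < N) m i * m j * (y j - y i) ^+ 2.
  by rewrite -big_split; apply: eq_bigr => i _; rewrite big_split.
rewrite !expand.
have hg : gmom m r = \sum_(i < N) m i * x i ^+ 2 + \sum_(i < N) m i * y i ^+ 2.
  rewrite /gmom -big_split; apply: eq_bigr => i _.
  by rewrite /pnorm sqr_sqrtr ?addr_ge0 ?sqr_ge0 // mulrDr.
rewrite g1 in hg.
set A := \sum_(i < N) m i.
set Bx := \sum_(i < N) m i * x i ^+ 2.
set By := \sum_(i < N) m i * y i ^+ 2.
set Cx := \sum_(i < N) m i * x i.
set Cy := \sum_(i < N) m i * y i.
have e : A = A * (Bx + By) by rewrite -hg mulr1.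
rewrite [X in _ <= X]e -subr_ge0.
have -> : A * (Bx + By) - 2^-1 * (2 * (A * Bx - Cx ^+ 2) + 2 * (A * By - Cy ^+ 2))
   = Cx ^+ 2 + Cy ^+ 2 by field.
by rewrite addr_ge0 ?sqr_ge0.
Qed.


Lemma CL_eq (gamma : R) (N : nat) (m : 'I_N -> R) :
  0 < \sum_(i < N) \sum_(j < N | (i < j)%N) m i * m j ->
  0 < \sum_(i < N) m i ->
  CL gamma m = gamma * ((\sum_(i < N) \sum_(j < N | (i < j)%N) m i * m j) *
     Num.sqrt (\sum_(i < N) \sum_(j < N | (i < j)%N) m i * m j))
   * (Num.sqrt (\sum_(i < N) m i))^-1.
Proof.
rewrite /CL; set S := \sum_(i < N) _; set M := \sum_(i < N) _ => S0 M0.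
have -> : (3 / 2 : R) = 1 + 2^-1 by field.
rewrite powRD; last by rewrite gt_eqF ?implybT.
rewrite powRr1 ?ltW // powR12_sqrt ?ltW //.
by rewrite powRN div1r powR12_sqrt ?ltW.
Qed.

Lemma final_alg (gamma S M : R) : 0 < S -> 0 < M ->
  let t := Num.sqrt M / Num.sqrt S in
  gamma * (S * Num.sqrt S) * (Num.sqrt M)^-1 =
  gamma * (3 / (2 * t)) * S - gamma / (2 * t ^+ 3) * M.
Proof.
move=> S0 M0 t; rewrite /t.
have hS : S = Num.sqrt S ^+ 2 by rewrite sqr_sqrtr ?ltW.
have hM : M = Num.sqrt M ^+ 2 by rewrite sqr_sqrtr ?ltW.
have s0 : Num.sqrt S != 0 by rewrite gt_eqF // sqrtr_gt0.
have u0 : Num.sqrt M != 0 by rewrite gt_eqF // sqrtr_gt0.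
have key : forall s u : R, s != 0 -> u != 0 ->
  gamma * (s ^+ 2 * s) / u =
  gamma * (3 / (2 * (u / s))) * s ^+ 2 - gamma / (2 * (u / s) ^+ 3) * u ^+ 2.
  by move=> s u a b; field; rewrite a b.
by have := key _ _ s0 u0; rewrite !sqr_sqrtr ?ltW.
Qed.


Lemma pointwise (gamma : R) (N : nat) (m : 'I_N -> R) (r : 'I_N -> R * R) :
  0 < gamma -> (forall i, 0 < m i) ->
  0 < \sum_(i < N) \sum_(j < N | (i < j)%N) m i * m j ->
  0 < \sum_(i < N) m i ->
  config_space r -> gmom m r = 1 -> CL gamma m <= fpot gamma m r.
Proof.
move=> g0 m0 S0 M0 hr g1.
rewrite CL_eq // final_alg //.
set S := \sum_(i < N) _ in S0 *; set M := \sum_(i < N) m i in M0 *.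
set t := Num.sqrt M / Num.sqrt S.
have t0 : 0 < t by rewrite divr_gt0 ?sqrtr_gt0.
set D := \sum_(i < N) \sum_(j < N | (i < j)%N) m i * m j * pdist (r i) (r j) ^+ 2.
have DM : D <= M by apply: D_le => // i; apply: ltW.
have c0 : 0 <= gamma / (2 * t ^+ 3) by rewrite divr_ge0 ?ltW // mulr_gt0 ?exprn_gt0.
apply: le_trans (_ : gamma * (3 / (2 * t)) * S - gamma / (2 * t ^+ 3) * D <= _).
  by rewrite lerB // ler_wpM2l.
have -> : gamma * (3 / (2 * t)) * S - gamma / (2 * t ^+ 3) * D =
  \sum_(i < N) \sum_(j < N | (i < j)%N)
     (gamma * m i * m j * (3 / (2 * t) - pdist (r i) (r j) ^+ 2 / (2 * t ^+ 3))).
  rewrite /S /D mulr_sumr mulr_sumr -sumrB; apply: eq_bigr => i _.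
  rewrite mulr_sumr mulr_sumr -sumrB; apply: eq_bigr => j _.
  ring.
rewrite /fpot; apply: ler_sum => i _; apply: ler_sum => j ij.
have dpos : 0 < pdist (r i) (r j).
  apply: pdist_gt0; apply: hr; rewrite neq_ltn ij //.
have -> : gamma * m i * m j / pdist (r i) (r j) =
   gamma * m i * m j * (1 / pdist (r i) (r j)) by rewrite mul1r.
apply: ler_wpM2l; first by rewrite !mulr_ge0 ?ltW.
exact: tangent.
Qed.


Lemma nonempty (N : nat) (m : 'I_N -> R) : (0 < N)%N -> (forall i, 0 < m i) ->
  exists r : 'I_N -> R * R, config_space r /\ gmom m r = 1.
Proof.
move=> N0 m0.
pose Q := \sum_(i < N) m i * (i.+1)%:R ^+ 2.
have Q0 : 0 < Q.
  apply: (@psum_gt0 N xpredT _ (Ordinal N0)) => // [i _|].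
    by rewrite mulr_ge0 ?ltW ?sqr_ge0.
  by rewrite mulr_gt0 // exprn_gt0 // ltr0n.
pose c := (Num.sqrt Q)^-1.
have c0 : 0 < c by rewrite invr_gt0 sqrtr_gt0.
exists (fun i => (c * (i.+1)%:R, 0)); split.
  move=> i j ij [] /(mulfI (lt0r_neq0 c0)) /eqP.
  rewrite eqr_nat eqSS => /eqP h; move: ij; rewrite (_ : i = j) ?eqxx //.
  exact: val_inj.
rewrite /gmom.
have -> : \sum_(i < N) m i * pnorm (c * (i.+1)%:R, 0) ^+ 2 = c ^+ 2 * Q.
  rewrite /Q mulr_sumr; apply: eq_bigr => i _.
  rewrite /pnorm sqr_sqrtr /=; last by rewrite addr_ge0 ?sqr_ge0.
  rewrite expr0n /= addr0 exprMn; ring.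
by rewrite /c exprVn sqr_sqrtr ?ltW // mulVf // lt0r_neq0.
Qed.

End Aux.

Theorem mainTheorem6 (R : realType) (gamma : R) (N : nat) (m : 'I_N -> R) :
  0 < gamma -> (2 <= N)%N -> (forall i, 0 < m i) ->
  CL gamma m <= Cmin gamma m.
Proof.
move=> g0 N2 m0.
have N0 : (0 < N)%N by apply: leq_trans N2.
have S0 : 0 < \sum_(i < N) \sum_(j < N | (i < j)%N) m i * m j.
  apply: (@psum_gt0 _ N xpredT _ (Ordinal N0)) => // [i _|].
    by apply: sumr_ge0 => j _; rewrite mulr_ge0 ?ltW.
  apply: (@psum_gt0 _ N _ _ (Ordinal N2)).
  - by [].
  - by move=> j _; rewrite mulr_ge0 ?ltW.
  - by rewrite mulr_gt0.
have M0 : 0 < \sum_(i < N) m i.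
  by apply: (@psum_gt0 _ N xpredT _ (Ordinal N0)) => // i _; apply: ltW.
rewrite /Cmin; apply: lb_le_inf.
  have [r [hr hg]] := @nonempty R _ m N0 m0.
  by exists (fpot gamma m r); exists r.
move=> _ [r [hr hg] <-].
exact: pointwise.
Qed.
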